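(* Let $\mathcal{G}$ be the graph on vertices $\{1,2,3,4,5,6\}$ with edges $\{1,2\},\{1,3\},\{2,3\},\{4,5\},\{4,6\},\{5,6\},\{1,4\},\{2,5\},\{3,6\}$, and let $|\mathcal{G}\rangle\in\mathcal{B}^6$ be the stabilizer state stabilized (with all signs $+1$) by the operators $\sigma^x_u\prod_{v:\{u,v\}\in E}\sigma^z_v$, $u=1,\dots,6$. Suppose $|\mathcal{G}\rangle$ is shared by four parties $A=\{1,4\}$, $B=\{3,6\}$, $C=\{2\}$, $D=\{5\}$. Then $|\mathcal{G}\rangle$ is irreducible: there is no decomposition in which $|\mathcal{G}\rangle$ is LCU-equivalent to $|\Psi'\rangle\otimes|\Psi''\rangle$ with $|\Psi'\rangle,|\Psi''\rangle$ four-party stabilizer states each consisting of at least one qubit (party $\alpha$ holding $k_\alpha$ qubits of $|\Psi'\rangle$ and $n_\alpha-k_\alpha$ of $|\Psi''\rangle$, $0\le k_\alpha\le n_\alpha$, $1\le\sum_\alpha k_\alpha\le 5$).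
   Context: $\sigma^x_u,\sigma^z_u$ denote the Pauli matrices acting on qubit $u$. The Clifford group $\mathcal{C}(k)$ is the set of unitaries $U$ on $k$ qubits mapping each tensor product of Pauli matrices and identities, under conjugation, to $\pm$ such a tensor product. A stabilizer state on $k$ qubits is a unit vector that is the unique (up to phase) common $\pm1$-eigenvector of an abelian group generated by $k$ independent commuting Pauli tensor products. Two multi-party stabilizer states are LCU-equivalent if one equals $\bigotimes_\alpha U_\alpha$ applied to the other (up to global phase), where $U_\alpha$ is a Clifford unitary acting on the qubits of party $\alpha$. *)

(* Defs.v *)
From HB Require Import structures.
From mathcomp Require Import all_boot all_order all_algebra all_field.
Set Implicit Arguments. Unset Strict Implicit. Unset Printing Implicit Defensive.
Import Order.TTheory GRing.Theory Num.Theory.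
Local Open Scope ring_scope.

(** Qubits are indexed by a finite type Q; computational basis states are
    bit assignments Q -> bool; a (possibly unnormalised) state is a function
    from basis states to C; an operator is its matrix (row, column). *)
Definition basis (Q : finType) := {ffun Q -> bool}.
Definition state (Q : finType) := basis Q -> algC.
Definition op (Q : finType) := basis Q -> basis Q -> algC.

Definition apply (Q : finType) (A : op Q) (v : state Q) : state Q :=
  fun x => \sum_(y : basis Q) A x y * v y.
Definition mulop (Q : finType) (A B : op Q) : op Q :=
  fun x z => \sum_(y : basis Q) A x y * B y z.
Definition adj (Q : finType) (A : op Q) : op Q := fun x y => (A y x)^*.
Definition idop (Q : finType) : op Q := fun x y => if x == y then 1 else 0.

Definition unit_vec (Q : finType) (v : state Q) : Prop :=
  \sum_(x : basis Q) `|v x| ^+ 2 = 1.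
Definition unitary (Q : finType) (U : op Q) : Prop :=
  (forall x y, mulop U (adj U) x y = idop x y) /\
  (forall x y, mulop (adj U) U x y = idop x y).

Inductive pauli := PI | PX | PY | PZ.
Definition pmat (p : pauli) (a b : bool) : algC :=
  match p with
  | PI => if a == b then 1 else 0
  | PX => if a == b then 0 else 1
  | PY => if a == b then 0 else (if a then 'i else - 'i)
  | PZ => if a == b then (if a then -1 else 1) else 0
  end.
Definition pstr (Q : finType) (P : Q -> pauli) : op Q :=
  fun x y => \prod_(q : Q) pmat (P q) (x q) (y q).
Definition sgn (s : bool) : algC := if s then -1 else 1.

Definition clifford (Q : finType) (U : op Q) : Prop :=
  unitary U /\
  forall P : Q -> pauli, exists (P' : Q -> pauli) (s : bool),
    forall x y, mulop (mulop U (pstr P)) (adj U) x y = sgn s * pstr P' x y.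

(** Symplectic bits of a Pauli letter (Pauli string up to phase). *)
Definition xbit (p : pauli) : bool := match p with PX | PY => true | _ => false end.
Definition zbit (p : pauli) : bool := match p with PZ | PY => true | _ => false end.
(** independence: no nonempty product of the generators is (proportional to)
    the identity. *)
Definition independent (Q : finType) k (g : 'I_k -> Q -> pauli) : Prop :=
  forall J : {set 'I_k}, J != set0 ->
    exists q : Q, (\big[addb/false]_(j in J) xbit (g j q)) ||
                  (\big[addb/false]_(j in J) zbit (g j q)).

Definition stabilizer_state (Q : finType) (psi : state Q) : Prop :=
  unit_vec psi /\
  exists (g : 'I_#|Q| -> Q -> pauli) (s : 'I_#|Q| -> bool),
    (forall i j x y, mulop (pstr (g i)) (pstr (g j)) x y =
                     mulop (pstr (g j)) (pstr (g i)) x y) /\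
    independent g /\
    (forall i x, apply (pstr (g i)) psi x = sgn (s i) * psi x) /\
    (forall phi : state Q,
       (forall i x, apply (pstr (g i)) phi x = sgn (s i) * phi x) ->
       exists c : algC, forall x, phi x = c * psi x).

Definition subQ (Q : finType) (S : {set Q}) : finType := {q : Q | q \in S}.
Definition restr (Q : finType) (S : {set Q}) (x : basis Q) : basis (subQ S) :=
  [ffun q : subQ S => x (val q)].

Definition prod_state (Q : finType) (S : {set Q}) (psi1 : state (subQ S))
    (psi2 : state (subQ (~: S))) : state Q :=
  fun x => psi1 (restr S x) * psi2 (restr (~: S) x).

Definition partQ (Q I : finType) (part : Q -> I) (a : I) : finType :=
  subQ [set q | part q == a].
Definition local_op (Q I : finType) (part : Q -> I)
    (U : forall a : I, op (partQ part a)) : op Q :=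
  fun x y => \prod_(a : I) U a (restr _ x) (restr _ y).

Definition LCU_equiv (Q I : finType) (part : Q -> I) (psi phi : state Q) : Prop :=
  exists U : forall a : I, op (partQ part a),
    (forall a, clifford (U a)) /\
    exists c : algC, `|c| = 1 /\
      forall x, apply (local_op U) psi x = c * phi x.

Definition reducible (Q I : finType) (part : Q -> I) (psi : state Q) : Prop :=
  exists S : {set Q}, S != set0 /\ S != setT /\
    exists (psi1 : state (subQ S)) (psi2 : state (subQ (~: S))),
      stabilizer_state psi1 /\ stabilizer_state psi2 /\
      LCU_equiv part psi (prod_state psi1 psi2).

(** The graph: vertices 1..6 are 'I_6 elements 0..5. *)
Definition edges6 : seq (nat * nat) :=
  [:: (1,2); (1,3); (2,3); (4,5); (4,6); (5,6); (1,4); (2,5); (3,6)]%N.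
Definition adj6 (u v : 'I_6) : bool :=
  ((u.+1, v.+1) \in edges6) || ((v.+1, u.+1) \in edges6).
Definition Kgen (u : 'I_6) : 'I_6 -> pauli :=
  fun v => if v == u then PX else if adj6 u v then PZ else PI.
(** Parties A = {1,4} -> 0, B = {3,6} -> 1, C = {2} -> 2, D = {5} -> 3. *)
Definition party6 (q : 'I_6) : 'I_4 :=
  match val q with
  | 0 | 3 => inord 0
  | 2 | 5 => inord 1
  | 1 => inord 2
  | _ => inord 3
  end%N.

(* Main.v *)
Require Import Defs.
From mathcomp Require Import all_boot all_order all_algebra all_field.
From mathcomp Require Import ring.
Set Implicit Arguments. Unset Strict Implicit. Unset Printing Implicit Defensive.
Import Order.TTheory GRing.Theory Num.Theory.
Local Open Scope ring_scope.


Definition sw (Q : finType) (T : {set Q}) (x y : basis Q) : basis Q :=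
  [ffun q => if q \in T then y q else x q].
Definition pur (Q : finType) (T : {set Q}) (f : state Q) : algC :=
  \sum_(x : basis Q) \sum_(y : basis Q)
     f x * f y * (f (sw T x y))^* * (f (sw T y x))^*.
Definition nrm (Q : finType) (f : state Q) : algC := \sum_(x : basis Q) `|f x| ^+ 2.

Definition glue (Q : finType) (T : {set Q}) (a : basis (subQ T)) (b : basis (subQ (~: T))) : basis Q :=
  [ffun q => if @insub Q (fun q => q \in T) (subQ T) q is Some q' then a q'
             else if @insub Q (fun q => q \in ~: T) (subQ (~: T)) q is Some q'' then b q''
             else false].

Lemma restr_glue1 (Q : finType) (T : {set Q}) a b : restr T (glue a b) = a.
Proof. by apply/ffunP => q; rewrite !ffunE valK. Qed.

Lemma restr_glue2 (Q : finType) (T : {set Q}) a b : restr (~: T) (glue a b) = b.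
Proof.
apply/ffunP => q; rewrite !ffunE insubF ?valK //.
by have := valP q; rewrite inE => /negbTE.
Qed.

Lemma glue_restr (Q : finType) (T : {set Q}) x : glue (restr T x) (restr (~: T) x) = x.
Proof.
apply/ffunP => q; rewrite !ffunE.
case: insubP => [q' _ <-|]; first by rewrite ffunE.
move=> qT; case: insubP => [q'' _ <-|]; first by rewrite ffunE.
by rewrite inE qT.
Qed.

Lemma sum_glue (Q : finType) (T : {set Q}) (F : basis Q -> algC) :
  \sum_x F x = \sum_(a : basis (subQ T)) \sum_(b : basis (subQ (~: T))) F (glue a b).
Proof.
rewrite pair_bigA /=.
rewrite (reindex (fun p : basis (subQ T) * basis (subQ (~: T)) => glue p.1 p.2)) //=.
exists (fun x => (restr T x, restr (~: T) x)) => [[a b] _|x _] /=.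
  by rewrite restr_glue1 restr_glue2.
by rewrite glue_restr.
Qed.


Definition TS (Q : finType) (R T : {set Q}) : {set subQ R} := [set q : subQ R | val q \in T].

Lemma restr_sw (Q : finType) (R T : {set Q}) x y : restr R (sw T x y) = sw (TS R T) (restr R x) (restr R y).
Proof. by apply/ffunP => q; rewrite !ffunE inE. Qed.

Lemma sum_split2 (Q : finType) (S : {set Q}) (F : basis (subQ S) -> algC) (G : basis (subQ (~: S)) -> algC) :
  \sum_x F (restr S x) * G (restr (~: S) x) = (\sum_a F a) * (\sum_b G b).
Proof.
rewrite (sum_glue S) mulr_suml; apply: eq_bigr => a _; rewrite mulr_sumr.
by apply: eq_bigr => b _; rewrite restr_glue1 restr_glue2.
Qed.

Lemma pur_prod (Q : finType) (S T : {set Q}) (p1 : state (subQ S)) (p2 : state (subQ (~: S))) :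
  pur T (prod_state p1 p2) = pur (TS S T) p1 * pur (TS (~: S) T) p2.
Proof.
rewrite /pur /prod_state.
pose A (a a' : basis (subQ S)) := p1 a * p1 a' * (p1 (sw (TS S T) a a'))^* * (p1 (sw (TS S T) a' a))^*.
pose B (b b' : basis (subQ (~: S))) := p2 b * p2 b' * (p2 (sw (TS (~: S) T) b b'))^* * (p2 (sw (TS (~: S) T) b' b))^*.
transitivity (\sum_x \sum_y A (restr S x) (restr S y) * B (restr (~: S) x) (restr (~: S) y)).
  apply: eq_bigr => x _; apply: eq_bigr => y _.
  rewrite /A /B !restr_sw !rmorphM /=; ring.
rewrite -sum_split2; apply: eq_bigr => x _.
by rewrite sum_split2 mulr_suml.
Qed.


Lemma pur_sym (Q : finType) (T : {set Q}) f : pur (~: T) f = pur T f.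
Proof.
rewrite /pur exchange_big; apply: eq_bigr => x _; apply: eq_bigr => y _.
have E z w : sw (~: T) z w = sw T w z by apply/ffunP => q; rewrite !ffunE inE; case: (q \in T).
by rewrite !E; ring.
Qed.

Lemma pur_set0 (Q : finType) f : pur (set0 : {set Q}) f = nrm f ^+ 2.
Proof.
rewrite /pur /nrm expr2 mulr_suml; apply: eq_bigr => x _; rewrite mulr_sumr.
apply: eq_bigr => y _.
have E z w : sw set0 z w = z by apply/ffunP => q; rewrite !ffunE inE.
by rewrite !E !normCK; ring.
Qed.

Lemma pur_setT (Q : finType) f : pur (setT : {set Q}) f = nrm f ^+ 2.
Proof.
rewrite /pur /nrm expr2 mulr_suml; apply: eq_bigr => x _; rewrite mulr_sumr.
apply: eq_bigr => y _.
have E z w : sw setT z w = w by apply/ffunP => q; rewrite !ffunE inE.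
by rewrite !E !normCK; ring.
Qed.

Lemma pur_scale (Q : finType) (T : {set Q}) f (c : algC) :
  `|c| = 1 -> pur T (fun x => c * f x) = pur T f.
Proof.
move=> c1; have cc : c * c^* = 1 by rewrite -normCK c1 expr1n.
rewrite /pur; apply: eq_bigr => x _; apply: eq_bigr => y _.
rewrite !rmorphM /=.
transitivity ((c * c^*) * (c * c^*) * (f x * f y * (f (sw T x y))^* * (f (sw T y x))^*)).
  by ring.
by rewrite cc !mul1r.
Qed.

Lemma pur_ext (Q : finType) (T : {set Q}) (f g : state Q) :
  (forall x, f x = g x) -> pur T f = pur T g.
Proof. by move=> E; rewrite /pur; apply: eq_bigr => x _; apply: eq_bigr => y _; rewrite !E. Qed.

Lemma cs_sum (K : finType) (r : K -> algC) : (forall k, r k \is Num.real) ->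
  (\sum_k r k) ^+ 2 <= #|K|%:R * \sum_k r k ^+ 2.
Proof.
move=> rR.
have H : 0 <= \sum_i \sum_j (r i - r j) ^+ 2.
  by apply: sumr_ge0 => i _; apply: sumr_ge0 => j _; apply: real_exprn_even_ge0 => //; rewrite rpredB.
have E : \sum_i \sum_j (r i - r j) ^+ 2 = 2%:R * (#|K|%:R * \sum_k r k ^+ 2 - (\sum_k r k) ^+ 2).
  transitivity (\sum_i \sum_j (r i ^+ 2 + r j ^+ 2 - 2%:R * (r i * r j))).
    by apply: eq_bigr => i _; apply: eq_bigr => j _; ring.
  rewrite (eq_bigr (fun i => #|K|%:R * r i ^+ 2 + \sum_j r j ^+ 2 - 2%:R * (r i * \sum_j r j))); last first.
    by move=> i _; rewrite sumrB big_split /= sumr_const -!mulr_sumr [#|K|%:R * _]mulr_natl.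
  rewrite sumrB big_split /= sumr_const -!mulr_sumr -mulr_suml.
  rewrite -mulr_natl; have -> : (#|(xpredT : pred K)| = #|K|)%N by [].
  ring.
move: H; rewrite E pmulr_rge0 ?ltr0n // subr_ge0 //.
Qed.

Lemma sw_glue (Q : finType) (T : {set Q}) x y : sw T x y = glue (restr T y) (restr (~: T) x).
Proof.
rewrite -[LHS](glue_restr T); congr glue; apply/ffunP => q; rewrite !ffunE.
  by rewrite (valP q).
by have := valP q; rewrite inE => /negbTE ->.
Qed.

Lemma card_basis_sub (Q : finType) (T : {set Q}) : #|basis (subQ T)| = (2 ^ #|T|)%N.
Proof. by rewrite card_ffun card_bool card_sig; congr (2 ^ _)%N; apply: eq_card => x; rewrite inE. Qed.

Lemma pur_lb (Q : finType) (T : {set Q}) (f : state Q) :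
  nrm f ^+ 2 <= 2%:R ^+ #|T| * pur T f.
Proof.
pose R (a a' : basis (subQ T)) := \sum_(b : basis (subQ (~: T))) f (glue a b) * (f (glue a' b))^*.
have E1 : pur T f = \sum_a \sum_a' `|R a a'| ^+ 2.
  rewrite /pur (sum_glue T); apply: eq_bigr => a _.
  under eq_bigr => b _ do rewrite (sum_glue T).
  rewrite exchange_big; apply: eq_bigr => a' _.
  rewrite normCK /R rmorph_sum mulr_suml; apply: eq_bigr => b _.
  rewrite mulr_sumr; apply: eq_bigr => b' _.
  rewrite !sw_glue !restr_glue1 !restr_glue2 !rmorphM /= conjCK; ring.
have E3 a : R a a = \sum_b `|f (glue a b)| ^+ 2.
  by apply: eq_bigr => b _; rewrite normCK.
have R0 a : 0 <= R a a by rewrite E3; apply: sumr_ge0 => b _; exact: exprn_ge0.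
have E2 : \sum_a R a a ^+ 2 <= pur T f.
  rewrite E1; apply: ler_sum => a _.
  rewrite (bigD1 a) //= ger0_norm // lerDl.
  by apply: sumr_ge0 => a' _; exact: exprn_ge0.
have E4 : \sum_a R a a = nrm f.
  by rewrite /nrm (sum_glue T); apply: eq_bigr => a _; rewrite E3.
have := cs_sum (fun a => ger0_real (R0 a)); rewrite E4 card_basis_sub natrX.
move/le_trans; apply; apply: ler_wpM2l => //.
by apply: exprn_ge0; rewrite ler0n.
Qed.

Definition colorth (K : finType) (V : K -> K -> algC) :=
  forall a b, \sum_p (V p a)^* * V p b = (a == b)%:R.

Lemma ip_pres (K : finType) (V : K -> K -> algC) (f g : K -> algC) : colorth V ->
  \sum_p (\sum_a V p a * f a) * (\sum_b V p b * g b)^* = \sum_p f p * (g p)^*.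
Proof.
move=> hV.
have -> : \sum_p (\sum_a V p a * f a) * (\sum_b V p b * g b)^* =
          \sum_p \sum_a \sum_b (V p b)^* * V p a * (f a * (g b)^*).
  apply: eq_bigr => p _; rewrite rmorph_sum mulr_suml; apply: eq_bigr => a _.
  by rewrite mulr_sumr; apply: eq_bigr => b _; rewrite rmorphM /=; ring.
rewrite exchange_big; apply: eq_bigr => a _; rewrite exchange_big /=.
rewrite (bigD1 a) //= [X in _ + X]big1 ?addr0; last first.
  by move=> b nba; rewrite -mulr_suml hV (negbTE nba) mul0r.
by rewrite -mulr_suml hV eqxx mul1r.
Qed.

Definition swp (Q : finType) (T : {set Q}) (p : basis Q * basis Q) := (sw T p.1 p.2, sw T p.2 p.1).

Lemma swpK (Q : finType) (T : {set Q}) : involutive (swp T).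
Proof.
by case=> x y; rewrite /swp /=; congr pair; apply/ffunP => q; rewrite !ffunE; case: (q \in T).
Qed.

Definition swcomm (Q : finType) (V : op Q) (T : {set Q}) :=
  forall x x' y y', V x x' * V y y' = V (sw T x y) (sw T x' y') * V (sw T y x) (sw T y' x').

Lemma pur_LU (Q : finType) (V : op Q) (T : {set Q}) (f : state Q) :
  colorth V -> swcomm V T -> pur T (apply V f) = pur T f.
Proof.
move=> hV hS.
pose F2 (g : state Q) (p : basis Q * basis Q) := g p.1 * g p.2.
pose V2 (p p' : basis Q * basis Q) := V p.1 p'.1 * V p.2 p'.2.
have Epur g : pur T g = \sum_p F2 g p * (F2 g (swp T p))^*.
  rewrite /pur (pair_bigA _ (fun x y => g x * g y * (g (sw T x y))^* * (g (sw T y x))^*)) /=.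
  apply: eq_bigr => -[x y] _ /=.
  by rewrite /F2 /= rmorphM /=; ring.
have EF p : F2 (apply V f) p = \sum_p' V2 p p' * F2 f p'.
  rewrite /F2 /apply mulr_suml; under eq_bigr => x' _ do rewrite mulr_sumr.
  rewrite (pair_bigA _ (fun x' y' => V p.1 x' * f x' * (V p.2 y' * f y'))) /=.
  by apply: eq_bigr => -[x' y'] _; rewrite /V2 /=; ring.
have V2o : colorth V2.
  move=> a b; rewrite /V2 -(pair_bigA _ (fun x y => (V x a.1 * V y a.2)^* * (V x b.1 * V y b.2))) /=.
  transitivity ((\sum_x (V x a.1)^* * V x b.1) * (\sum_y (V y a.2)^* * V y b.2)).
    rewrite mulr_suml; apply: eq_bigr => x _; rewrite mulr_sumr; apply: eq_bigr => y _.
    by rewrite rmorphM /=; ring.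
  rewrite !hV; case: a b => [a1 a2] [b1 b2]; rewrite xpair_eqE /=.
  by case: (a1 == b1); case: (a2 == b2); rewrite ?mul1r ?mul0r.
have SC2 p p' : V2 p p' = V2 (swp T p) (swp T p') by case: p p' => [x y] [x' y']; exact: hS.
have EF2 p : F2 (apply V f) p = \sum_p' V2 (swp T p) p' * F2 f (swp T p').
  rewrite EF (reindex_inj (can_inj (swpK T))) /=.
  by apply: eq_bigr => p' _; rewrite SC2 swpK.
rewrite !Epur.
transitivity (\sum_p (\sum_p' V2 (swp T p) p' * F2 f (swp T p')) * (\sum_p' V2 (swp T p) p' * F2 f p')^*).
  by apply: eq_bigr => p _; rewrite EF2 EF.
rewrite (reindex_inj (can_inj (swpK T))) /=.
under eq_bigr => p _ do rewrite swpK.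
rewrite (ip_pres (fun p => F2 f (swp T p)) (F2 f) V2o).
rewrite [RHS](reindex_inj (can_inj (swpK T))) /=.
by under [RHS]eq_bigr => p _ do rewrite swpK.
Qed.

Section MF.
Variables (Q I : finType) (p : Q -> I).

Definition zo (a : I) : pred (basis Q) := fun X => [forall q, (p q != a) ==> ~~ X q].
Definition extp (a : I) (w : basis (partQ p a)) : basis Q :=
  [ffun q => if @insub Q (fun q => q \in [set q | p q == a]) (partQ p a) q is Some q' then w q' else false].
Definition splitp (X : basis Q) : {ffun I -> basis Q} := [ffun a => [ffun q => (p q == a) && X q]].
Definition combp (f : {ffun I -> basis Q}) : basis Q := [ffun q => f (p q) q].

Lemma sum_part1 a (F : basis (partQ p a) -> algC) :
  \sum_w F w = \sum_(X | zo a X) F (restr [set q | p q == a] X).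
Proof.
rewrite (reindex_onto (@extp a) (restr [set q | p q == a])) /=.
  apply: eq_big => w.
    symmetry; apply/andP; split.
      apply/forallP => q; apply/implyP => nq; rewrite ffunE insubF //.
      by rewrite inE (negbTE nq).
    apply/eqP/ffunP => q; rewrite !ffunE valK //.
  move=> _; congr F; apply/ffunP => q; rewrite !ffunE valK //.
move=> X /forallP zX; apply/ffunP => q; rewrite !ffunE.
case: insubP => [q' _ <-|]; first by rewrite ffunE.
by rewrite inE => nq; have /implyP := zX q => /(_ nq) /negbTE.
Qed.

Lemma sum_prod_parts (F : forall a : I, basis (partQ p a) -> algC) :
  \sum_(X : basis Q) \prod_a F a (restr [set q | p q == a] X) =
  \prod_a \sum_(w : basis (partQ p a)) F a w.
Proof.
under [RHS]eq_bigr => a _ do rewrite sum_part1.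
rewrite (bigA_distr_big_dep zo (fun a X => F a (restr [set q | p q == a] X))).
rewrite (reindex_onto splitp combp) /=; last first.
  move=> f /familyP fF; apply/ffunP => a; apply/ffunP => q; rewrite !ffunE.
  case: eqP => [<-|/eqP nq] //.
  by have /forallP /(_ q) /implyP /(_ nq) /negbTE := fF a.
apply: eq_big => [X|X _].
  symmetry; apply/andP; split.
    apply/familyP => a; apply/forallP => q; rewrite !ffunE.
    by apply/implyP => /negbTE ->.
  by apply/eqP/ffunP => q; rewrite !ffunE eqxx.
apply: eq_bigr => a _; congr F; apply/ffunP => q; rewrite !ffunE.
by have := valP q; rewrite inE => ->.
Qed.

End MF.

Lemma clifford_colorth (Q : finType) (U : op Q) : clifford U -> colorth U.
Proof.
case=> [[_ h2] _] a b; have := h2 a b; rewrite /mulop /adj /idop => ->.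
by case: (a == b).
Qed.

Lemma local_colorth (Q I : finType) (part : Q -> I) (U : forall a : I, op (partQ part a)) :
  (forall a, colorth (U a)) -> colorth (local_op U).
Proof.
move=> hU x z; rewrite /local_op.
under eq_bigr => X _ do rewrite rmorph_prod -big_split /=.
rewrite (sum_prod_parts (fun a w => (U a w (restr [set q | part q == a] x))^* * U a w (restr [set q | part q == a] z))).
under eq_bigr => a _ do rewrite hU.
case: eqP => [->|/eqP nxz].
  by apply: big1 => a _; rewrite eqxx.
have [q nq] : exists q, x q != z q.
  apply/existsP; apply: contraR nxz => /existsPn H; apply/eqP/ffunP => q.
  by apply/eqP; have := H q; rewrite negbK.
rewrite (bigD1 (part q)) //=.
suff -> : (restr [set q0 | part q0 == part q] x == restr [set q0 | part q0 == part q] z) = false by rewrite mul0r.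
apply/negbTE; apply: contra nq => /eqP /ffunP.
have qin : q \in [set q0 | part q0 == part q] by rewrite inE.
by move/(_ (Sub q qin)); rewrite !ffunE /= => ->.
Qed.

Lemma restr_swP (Q I : finType) (part : Q -> I) (P : {set I}) a x y :
  restr [set q | part q == a] (sw [set q | part q \in P] x y) =
  if a \in P then restr [set q | part q == a] y else restr [set q | part q == a] x.
Proof.
have E (q : subQ [set q | part q == a]) : part (val q) = a by have := valP q; rewrite inE => /eqP.
by case: ifP => aP; apply/ffunP => q; rewrite !ffunE inE E aP.
Qed.

Lemma local_swcomm (Q I : finType) (part : Q -> I) (U : forall a : I, op (partQ part a)) (P : {set I}) :
  swcomm (local_op U) [set q | part q \in P].
Proof.
move=> x x' y y'; rewrite /local_op -!big_split /=; apply: eq_bigr => a _.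
by rewrite !restr_swP; case: (a \in P) => //; rewrite mulrC.
Qed.

Lemma sum_sets (Q : finType) (a b : Q -> algC) :
  \sum_(T : {set Q}) \prod_q (if q \in T then a q else b q) = \prod_q (b q + a q).
Proof.
transitivity (\prod_q \sum_(c : bool) (if c then a q else b q)); last first.
  by apply: eq_bigr => q _; rewrite big_bool /= addrC.
rewrite bigA_distr_bigA /=.
rewrite (reindex (fun phi : {ffun Q -> bool} => [set q | phi q])) /=; last first.
  exists (fun T : {set Q} => [ffun q => q \in T]) => [phi _|T _].
    by apply/ffunP => q; rewrite !ffunE inE.
  by apply/setP => q; rewrite !inE ffunE.
by apply: eq_bigr => phi _; apply: eq_bigr => q _; rewrite inE.
Qed.

Lemma eq_ffun_prod (Q : finType) (z v : basis Q) :
  ((z == v)%:R : algC) = \prod_q ((z q == v q)%:R).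
Proof.
case: eqP => [->|/eqP nzv]; first by rewrite big1 // => q _; rewrite eqxx.
have [q nq] : exists q, z q != v q.
  apply/existsP; apply: contraR nzv => /existsPn H; apply/eqP/ffunP => q.
  by apply/eqP; have := H q; rewrite negbK.
by rewrite (bigD1 q) //= (negbTE nq) mul0r.
Qed.

Lemma sum_ind (K : finType) (v : K) (g : K -> algC) : \sum_y (y == v)%:R * g y = g v.
Proof.
rewrite (bigD1 v) //= eqxx mul1r big1 ?addr0 // => y nyv.
by rewrite (negbTE nyv) mul0r.
Qed.

Definition negf (Q : finType) (x : basis Q) : basis Q := [ffun q => ~~ x q].
Definition sgb (b : bool) : algC := if b then -1 else 1.

Lemma shadow (Q : finType) (f : state Q) :
  0 <= \sum_(T : {set Q}) (-1) ^+ #|T| * pur T f.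
Proof.
pose s (x : basis Q) := \prod_q sgb (x q).
pose A := \sum_x s x * f x * f (negf x).
suff -> : \sum_(T : {set Q}) (-1) ^+ #|T| * pur T f = A * A^*.
  by rewrite -normCK; exact: exprn_ge0.
have Ecard (T : {set Q}) : (-1) ^+ #|T| = \prod_q (if q \in T then -1 else 1) :> algC.
  by rewrite -big_mkcond /= prodr_const.
have Ed x y (T : {set Q}) : (f (sw T x y))^* * (f (sw T y x))^* =
   \sum_z \sum_w (f z)^* * (f w)^* *
     \prod_q ((z q == (if q \in T then y q else x q))%:R * (w q == (if q \in T then x q else y q))%:R).
  transitivity (\sum_z \sum_w (f z)^* * (f w)^* * ((z == sw T x y)%:R * (w == sw T y x)%:R)); last first.
    apply: eq_bigr => z _; apply: eq_bigr => w _; rewrite !eq_ffun_prod -big_split /=.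
    by congr (_ * _); apply: eq_bigr => q _; rewrite !ffunE.
  transitivity (\sum_z (z == sw T x y)%:R * ((f z)^* * \sum_w (w == sw T y x)%:R * (f w)^*)); last first.
    apply: eq_bigr => z _; rewrite mulr_sumr mulr_sumr; apply: eq_bigr => w _; ring.
  by rewrite sum_ind sum_ind.
pose e1 (x y z w : basis Q) q : algC := (z q == y q)%:R * (w q == x q)%:R.
pose e0 (x y z w : basis Q) q : algC := (z q == x q)%:R * (w q == y q)%:R.
have Step : \sum_(T : {set Q}) (-1) ^+ #|T| * pur T f =
   \sum_x \sum_y \sum_z \sum_w f x * f y * (f z)^* * (f w)^* *
      \sum_(T : {set Q}) \prod_q (if q \in T then - e1 x y z w q else e0 x y z w q).
  rewrite /pur.
  under eq_bigr => T _ do rewrite mulr_sumr.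
  rewrite exchange_big; apply: eq_bigr => x _.
  under eq_bigr => T _ do rewrite mulr_sumr.
  rewrite exchange_big; apply: eq_bigr => y _.
  under eq_bigr => T _ do rewrite -mulrA Ed mulr_sumr.
  under eq_bigr => T _ do rewrite mulr_sumr.
  rewrite exchange_big; apply: eq_bigr => z _.
  under eq_bigr => T _ do rewrite mulr_sumr mulr_sumr.
  rewrite exchange_big; apply: eq_bigr => w _.
  rewrite mulr_sumr; apply: eq_bigr => T _.
  rewrite Ecard.
  have -> : \prod_q (if q \in T then - e1 x y z w q else e0 x y z w q) =
      (\prod_q (if q \in T then -1 else 1)) *
      \prod_q ((z q == (if q \in T then y q else x q))%:R * (w q == (if q \in T then x q else y q))%:R).
    rewrite -big_split /=; apply: eq_bigr => q _; rewrite /e1 /e0.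
    by case: (q \in T); rewrite ?mul1r ?mulN1r.
  ring.
rewrite Step.
have sR z : (s z)^* = s z.
  by rewrite rmorph_prod; apply: eq_bigr => q _; rewrite /sgb; case: (z q); rewrite ?rmorphN rmorph1.
have Eprod x y z w : \sum_(T : {set Q}) \prod_q (if q \in T then - e1 x y z w q else e0 x y z w q) =
    (y == negf x)%:R * (w == negf z)%:R * (s x * s z).
  rewrite sum_sets.
  transitivity (\prod_q ((y q == negf x q)%:R * (w q == negf z q)%:R * (sgb (x q) * sgb (z q)))).
    apply: eq_bigr => q _; rewrite /e0 /e1 !ffunE.
    by case: (x q); case: (y q); case: (z q); case: (w q); rewrite /sgb /=; ring.
  by rewrite !big_split /= -!eq_ffun_prod.
transitivity (\sum_x \sum_z (s x * f x * f (negf x)) * (s z * f z * f (negf z))^*); last first.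
  by rewrite mulr_suml; apply: eq_bigr => x _; rewrite rmorph_sum mulr_sumr.
apply: eq_bigr => x _.
transitivity (\sum_y (y == negf x)%:R * \sum_z (s x * f x * f y) * (s z * f z * f (negf z))^*).
  apply: eq_bigr => y _; rewrite mulr_sumr; apply: eq_bigr => z _.
  under eq_bigr => w _ do rewrite Eprod.
  transitivity (\sum_w (w == negf z)%:R * ((y == negf x)%:R * (s x * f x * f y) * (s z * f z * f w)^*)).
    by apply: eq_bigr => w _; rewrite !rmorphM /= sR; ring.
  by rewrite sum_ind; ring.
by rewrite (sum_ind (negf x) (fun y => \sum_z s x * f x * f y * (s z * f z * f (negf z))^*)).
Qed.

Definition flip (Q : finType) (u : Q) (x : basis Q) : basis Q :=
  [ffun q => if q == u then ~~ x q else x q].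
Definition zero_b (Q : finType) : basis Q := [ffun _ => false].

Lemma flip_const (Q : finType) (H : basis Q -> algC) :
  (forall u x, H x = H (flip u x)) -> forall x, H x = H (zero_b Q).
Proof.
move=> hH.
suff : forall n (x : basis Q), #|[set q | x q]| = n -> H x = H (zero_b Q) by move=> h x; exact: h _ x erefl.
elim=> [|n IH] x hx.
  congr H; apply/ffunP => q; rewrite ffunE.
  apply/negbTE; apply/negP => xq.
  by move/eqP: hx; rewrite cards_eq0 => /eqP/setP/(_ q); rewrite !inE xq.
have : [set q | x q] != set0 by rewrite -card_gt0 hx.
case/set0Pn => u; rewrite inE => xu.
rewrite (hH u x); apply: IH.
have -> : [set q | flip u x q] = [set q | x q] :\ u.
  apply/setP => q; rewrite !inE !ffunE; case: eqP => [->|_] //=.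
  by rewrite xu.
by move: hx; rewrite (cardsD1 u) inE xu add1n => -[].
Qed.

Lemma sgbD a b : sgb (a (+) b) = sgb a * sgb b.
Proof. by case: a; case: b; rewrite /sgb /= ?mulN1r ?mul1r ?opprK. Qed.

Lemma sgb_big (I : finType) (P : pred I) (g : I -> bool) :
  sgb (\big[addb/false]_(i | P i) g i) = \prod_(i | P i) sgb (g i).
Proof. by apply: (big_morph sgb sgbD). Qed.

Lemma sgb2 b : sgb b * sgb b = 1.
Proof. by case: b; rewrite /sgb ?mulN1r ?opprK ?mul1r. Qed.

Definition kpar (u : 'I_6) (x : basis 'I_6) : bool :=
  \big[addb/false]_(q : 'I_6) ((q != u) && adj6 u q && x q).

Lemma pstr_K u x y : pstr (Kgen u) x y = if y == flip u x then sgb (kpar u x) else 0.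
Proof.
rewrite /pstr /kpar sgb_big; case: eqP => [->|/eqP ny].
  apply: eq_bigr => q _; rewrite /Kgen ffunE.
  case: (q =P u) => [->|/eqP nq] /=; first by case: (x u).
  by case: (adj6 u q) => //=; case: (x q).
have [q nq] : exists q, y q != flip u x q.
  apply/existsP; apply: contraR ny => /existsPn H; apply/eqP/ffunP => q.
  by apply/eqP; have := H q; rewrite negbK.
rewrite (bigD1 q) //= [pmat _ _ _](_ : _ = 0) ?mul0r //.
move: nq; rewrite /Kgen ffunE.
case: (q =P u) => [->|_] /=; first by case: (x u); case: (y u).
by case: (adj6 u q) => /=; case: (x q); case: (y q).
Qed.

Lemma apply_K u (G : state 'I_6) x : apply (pstr (Kgen u)) G x = sgb (kpar u x) * G (flip u x).
Proof.
rewrite /apply (bigD1 (flip u x)) //= pstr_K eqxx big1 ?addr0 // => y ny.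
by rewrite pstr_K (negbTE ny) mul0r.
Qed.

Definition o0 : 'I_6 := @Ordinal 6 0 isT.
Definition o1 : 'I_6 := @Ordinal 6 1 isT.
Definition o2 : 'I_6 := @Ordinal 6 2 isT.
Definition o3 : 'I_6 := @Ordinal 6 3 isT.
Definition o4 : 'I_6 := @Ordinal 6 4 isT.
Definition o5 : 'I_6 := @Ordinal 6 5 isT.

Definition par (x : basis 'I_6) : bool :=
  (x o0 && x o1) (+) (x o0 && x o2) (+) (x o1 && x o2) (+) (x o3 && x o4) (+)
  (x o3 && x o5) (+) (x o4 && x o5) (+) (x o0 && x o3) (+) (x o1 && x o4) (+) (x o2 && x o5).

Lemma sum6 (g : 'I_6 -> bool) : \big[addb/false]_(q : 'I_6) g q =
   g o0 (+) (g o1 (+) (g o2 (+) (g o3 (+) (g o4 (+) (g o5 (+) false))))).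
Proof.
rewrite !big_ord_recl big_ord0.
by do 6 (congr addb; first by congr g; apply: val_inj).
Qed.

Lemma par_flip u x : par x = kpar u x (+) par (flip u x).
Proof.
rewrite /kpar sum6 /par !ffunE.
case: u => [[|[|[|[|[|[|//]]]]]] hu]; rewrite /adj6 /= ;
  case: (x o0); case: (x o1); case: (x o2); case: (x o3); case: (x o4); case: (x o5); by [].
Qed.

Lemma G_form (G : state 'I_6) : (forall u x, apply (pstr (Kgen u)) G x = G x) ->
  forall x, G x = sgb (par x) * G (zero_b _).
Proof.
move=> hK.
pose H x := sgb (par x) * G x.
have hH : forall u x, H x = H (flip u x).
  move=> u x; rewrite /H -[in LHS](hK u x) apply_K [in LHS](par_flip u x) sgbD.
  by rewrite mulrA -[sgb (kpar u x) * _ * _]mulrA [_ * sgb (kpar u x)]mulrC mulrA sgb2 mul1r.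
move=> x; have := flip_const hH x; rewrite /H.
have -> : par (zero_b 'I_6) = false by rewrite /par !ffunE.
rewrite /sgb /= mul1r => <-.
by rewrite mulrA sgb2 mul1r.
Qed.

Fixpoint allbits (n : nat) : seq (seq bool) :=
  if n is n'.+1 then [seq b :: l | b <- [:: false; true], l <- allbits n'] else [:: [::]].
Definition bits6 := allbits 6.
Definition ofb (l : seq bool) : basis 'I_6 := [ffun q : 'I_6 => nth false l q].

Lemma ofb_eta (x : basis 'I_6) : x = ofb [:: x o0; x o1; x o2; x o3; x o4; x o5].
Proof.
apply/ffunP => q; rewrite ffunE.
by case: q => [[|[|[|[|[|[|//]]]]]] hq] /=; congr (x _); apply: val_inj.
Qed.

Lemma sum_bits (F : basis 'I_6 -> algC) : \sum_x F x = \sum_(l <- bits6) F (ofb l).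
Proof.
rewrite -(big_map ofb predT F); apply: perm_big; apply: uniq_perm.
- exact: index_enum_uniq.
- rewrite map_inj_in_uniq //.
  move=> l l' hl hl' E.
  have hall : all (fun l : seq bool => size l == 6%N) bits6 by [].
  have sl : size l = 6%N by apply/eqP; exact: (allP hall l hl).
  have sl' : size l' = 6%N by apply/eqP; exact: (allP hall l' hl').
  apply: (@eq_from_nth _ false); rewrite ?sl ?sl' // => i hi.
  by have := congr1 (fun f : basis 'I_6 => f (Ordinal hi)) E; rewrite !ffunE.
- move=> x; rewrite mem_index_enum; symmetry; apply/mapP.
  exists [:: x o0; x o1; x o2; x o3; x o4; x o5]; last exact: ofb_eta.
  by case: (x o0); case: (x o1); case: (x o2); case: (x o3); case: (x o4); case: (x o5).
Qed.

Definition TpP (P : {set 'I_4}) : {set 'I_6} := [set q | party6 q \in P].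

Definition swlb (bA bB bC bD : bool) (l m : seq bool) : seq bool :=
  [:: if bA then nth false m 0 else nth false l 0;
      if bC then nth false m 1 else nth false l 1;
      if bB then nth false m 2 else nth false l 2;
      if bA then nth false m 3 else nth false l 3;
      if bD then nth false m 4 else nth false l 4;
      if bB then nth false m 5 else nth false l 5].

Definition parl (l : seq bool) : bool :=
  let n := nth false l in
  (n 0 && n 1) (+) (n 0 && n 2) (+) (n 1 && n 2) (+) (n 3 && n 4) (+)
  (n 3 && n 5) (+) (n 4 && n 5) (+) (n 0 && n 3) (+) (n 1 && n 4) (+) (n 2 && n 5).

Lemma par_ofb l : par (ofb l) = parl l.
Proof. by rewrite /par !ffunE. Qed.

Definition bA (P : {set 'I_4}) := inord 0 \in P.
Definition bB (P : {set 'I_4}) := inord 1 \in P.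
Definition bC (P : {set 'I_4}) := inord 2 \in P.
Definition bD (P : {set 'I_4}) := inord 3 \in P.

Lemma sw_ofb P l m : sw (TpP P) (ofb l) (ofb m) = ofb (swlb (bA P) (bB P) (bC P) (bD P) l m).
Proof.
apply/ffunP => q; rewrite !ffunE inE.
by case: q => [[|[|[|[|[|[|//]]]]]] hq].
Qed.

Definition sgz (b : bool) : int := if b then -1 else 1.

Definition Nc (a b c d : bool) : int :=
  \sum_(l <- bits6) \sum_(m <- bits6)
    sgz (parl l (+) parl m (+) parl (swlb a b c d l m) (+) parl (swlb a b c d m l)).

Definition Eb (a b c d : bool) : nat :=
  match a, b, c, d with
  | false, false, false, false => 0
  | true, false, false, false => 2
  | false, true, false, false => 2
  | false, false, true, false => 1
  | false, false, false, true => 1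
  | true, true, false, false => 2
  | true, false, true, false => 3
  | true, false, false, true => 3
  | false, true, true, false => 3
  | false, true, false, true => 3
  | false, false, true, true => 2
  | true, true, true, false => 1
  | true, true, false, true => 1
  | true, false, true, true => 2
  | false, true, true, true => 2
  | true, true, true, true => 0
  end%N.

Lemma Nc_val a b c d : Nc a b c d = (2 ^ (12 - Eb a b c d))%N%:Z.
Proof.
by case: a; case: b; case: c; case: d; rewrite /Nc unlock; vm_compute; reflexivity.
Qed.

Lemma sgb_int b : sgb b = (sgz b)%:~R.
Proof. by case: b. Qed.

Lemma sgb_conj b : (sgb b)^* = sgb b.
Proof. by case: b; rewrite /sgb ?rmorphN rmorph1. Qed.

Lemma sgb_norm b : `|sgb b| = 1.
Proof. by case: b; rewrite /sgb ?normrN normr1. Qed.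

Lemma card_basis6 : #|basis 'I_6| = 64%N.
Proof. by rewrite card_ffun card_bool card_ord. Qed.

Lemma purG (G : state 'I_6) : unit_vec G -> (forall u x, apply (pstr (Kgen u)) G x = G x) ->
  forall P, pur (TpP P) G = (2%:R ^+ Eb (bA P) (bB P) (bC P) (bD P))^-1.
Proof.
move=> uG hK P.
pose g0 := G (zero_b 'I_6).
have Gx x : G x = sgb (par x) * g0 := G_form hK x.
have n0 : g0 * g0^* = 64%:R^-1.
  move: uG; rewrite /unit_vec.
  under eq_bigr => x _ do rewrite Gx normrM sgb_norm mul1r.
  rewrite sumr_const card_basis6 => h.
  have h' : `|g0| ^+ 2 * 64%:R = 1 by rewrite mulr_natr.
  by rewrite -normCK -[LHS](mulrK (_ : 64%:R \is a GRing.unit)) ?unitfE ?pnatr_eq0 // h' mul1r.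
have E1 : pur (TpP P) G = (g0 * g0^*) ^+ 2 *
   \sum_x \sum_y sgb (par x) * sgb (par y) * sgb (par (sw (TpP P) x y)) * sgb (par (sw (TpP P) y x)).
  rewrite /pur mulr_sumr; apply: eq_bigr => x _; rewrite mulr_sumr; apply: eq_bigr => y _.
  by rewrite !Gx !rmorphM /= !sgb_conj; ring.
have E2 : \sum_x \sum_y sgb (par x) * sgb (par y) * sgb (par (sw (TpP P) x y)) * sgb (par (sw (TpP P) y x))
   = (Nc (bA P) (bB P) (bC P) (bD P))%:~R.
  rewrite /Nc sum_bits (big_morph (fun n : int => n%:~R : algC) (@intrD _) (mulr0z 1)).
  apply: eq_bigr => l _; rewrite sum_bits (big_morph (fun n : int => n%:~R : algC) (@intrD _) (mulr0z 1)).
  apply: eq_bigr => m _.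
  by rewrite !sw_ofb !par_ofb -!sgbD sgb_int.
rewrite E1 E2 n0 Nc_val.
have he : (Eb (bA P) (bB P) (bC P) (bD P) <= 12)%N.
  by case: (bA P); case: (bB P); case: (bC P); case: (bD P).
move: he; set e := Eb _ _ _ _ => he.
have -> : ((2 ^ (12 - e))%N%:~R : algC) = 2%:R ^+ (12 - e) by rewrite -natrX.
have -> : (64%:R^-1 : algC) ^+ 2 = (2%:R ^+ (12 - e) * 2%:R ^+ e)^-1.
  by rewrite -exprD subnK // exprVn -!natrX.
by rewrite invfM mulrC mulrA mulfV ?mul1r // expf_neq0 // pnatr_eq0.
Qed.

Lemma card_subQ (Q : finType) (R : {set Q}) : #|subQ R| = #|R|.
Proof. by rewrite card_sig; apply: eq_card => x; rewrite inE. Qed.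

Lemma lbm (Q : finType) (R : {set Q}) (psi : state (subQ R)) (T : {set subQ R}) :
  unit_vec psi -> 1 <= 2%:R ^+ (minn #|T| (#|R| - #|T|)) * pur T psi.
Proof.
move=> u; have n1 : nrm psi = 1 by [].
case: (leqP #|T| (#|R| - #|T|)) => h.
  by have := pur_lb T psi; rewrite n1 expr1n.
rewrite -pur_sym.
have := pur_lb (~: T) psi; rewrite n1 expr1n cardsCs setCK card_subQ.
by [].
Qed.

Lemma card_TS (Q : finType) (R X : {set Q}) : #|TS R X| = #|R :&: X|.
Proof.
rewrite -(card_imset _ val_inj); apply: eq_card => x; rewrite !inE.
apply/imsetP/andP => [[q]|[xR xX]].
  by rewrite inE => qX ->; split => //; exact: (valP q).
by exists (Sub x xR); rewrite ?inE.
Qed.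

Lemma card6 (A : {set 'I_6}) : #|A| =
  ((o0 \in A) + (o1 \in A) + (o2 \in A) + (o3 \in A) + (o4 \in A) + (o5 \in A))%N.
Proof.
rewrite -sum1_card big_mkcond /= !big_ord_recl big_ord0.
have e1 : lift ord0 (ord0 : 'I_5) = o1 by apply: val_inj.
have e2 : lift ord0 (lift ord0 (ord0 : 'I_4)) = o2 by apply: val_inj.
have e3 : lift ord0 (lift ord0 (lift ord0 (ord0 : 'I_3))) = o3 by apply: val_inj.
have e4 : lift ord0 (lift ord0 (lift ord0 (lift ord0 (ord0 : 'I_2)))) = o4 by apply: val_inj.
have e5 : lift ord0 (lift ord0 (lift ord0 (lift ord0 (lift ord0 (ord0 : 'I_1))))) = o5 by apply: val_inj.
rewrite e1 e2 e3 e4 e5 (_ : ord0 = o0) //; last by apply: val_inj.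
by case: (o0 \in A); case: (o1 \in A); case: (o2 \in A); case: (o3 \in A); case: (o4 \in A); case: (o5 \in A).
Qed.

Lemma card_cut (R : {set 'I_6}) (P : {set 'I_4}) : #|TS R (TpP P)| =
  (((o0 \in R) && bA P) + ((o1 \in R) && bC P) + ((o2 \in R) && bB P) +
   ((o3 \in R) && bA P) + ((o4 \in R) && bD P) + ((o5 \in R) && bB P))%N.
Proof. by rewrite card_TS card6 !inE. Qed.

Lemma two_pos n : 0 < (2%:R : algC) ^+ n.
Proof. by apply: exprn_gt0; rewrite ltr0n. Qed.

Lemma ineq_nat (E m1 m2 : nat) (p1 p2 : algC) : p1 * p2 = (2%:R ^+ E)^-1 ->
  1 <= 2%:R ^+ m1 * p1 -> 1 <= 2%:R ^+ m2 * p2 -> (E <= m1 + m2)%N.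
Proof.
move=> hp h1 h2.
have h : 1 * 1 <= (2%:R ^+ m1 * p1) * (2%:R ^+ m2 * p2) by apply: ler_pM.
have E' : (2%:R ^+ m1 * p1) * (2%:R ^+ m2 * p2) = 2%:R ^+ (m1 + m2) / 2%:R ^+ E.
  by rewrite exprD -hp; ring.
move: h; rewrite E'; rewrite mul1r ler_pdivlMr ?two_pos // mul1r -!natrX ler_nat leq_exp2l //.
Qed.

Lemma ineq_quarter (E m : nat) (p p' : algC) : p' * p = (2%:R ^+ E)^-1 ->
  1 <= 2%:R ^+ m * p' -> (m + 2 <= E)%N -> 0 <= p -> p <= 4%:R^-1.
Proof.
move=> hp h1 hE p0.
have p'0 : 0 < p'.
  by have := lt_le_trans ltr01 h1; rewrite pmulr_rgt0 ?two_pos.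
have e : p = (2%:R ^+ E)^-1 / p' by rewrite -hp [p' * p]mulrC mulfK // gt_eqF.
have le1 : p <= (2%:R ^+ E)^-1 * 2%:R ^+ m.
  rewrite e ler_pdivrMr // -mulrA -[X in X <= _]mulr1 ler_wpM2l //.
  by rewrite invr_ge0 ltW // two_pos.
apply: (le_trans le1).
rewrite ler_pdivrMl ?two_pos // ler_pdivlMr ?ltr0n //.
rewrite -!natrX -natrM ler_nat -(expnD 2 m 2) leq_exp2l //.
Qed.

Definition cnt (r0 r1 r2 r3 r4 r5 a b c d : bool) : nat :=
  ((r0 && a) + (r1 && c) + (r2 && b) + (r3 && a) + (r4 && d) + (r5 && b))%N.
Definition tot (r0 r1 r2 r3 r4 r5 : bool) : nat := (r0 + r1 + r2 + r3 + r4 + r5)%N.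
Definition cond (r0 r1 r2 r3 r4 r5 a b c d : bool) : bool :=
  let c1 := cnt r0 r1 r2 r3 r4 r5 a b c d in
  let s1 := tot r0 r1 r2 r3 r4 r5 in
  let c2 := cnt (~~ r0) (~~ r1) (~~ r2) (~~ r3) (~~ r4) (~~ r5) a b c d in
  let s2 := tot (~~ r0) (~~ r1) (~~ r2) (~~ r3) (~~ r4) (~~ r5) in
  (Eb a b c d <= minn c1 (s1 - c1) + minn c2 (s2 - c2))%N.

Lemma comb r0 r1 r2 r3 r4 r5 :
  [&& cond r0 r1 r2 r3 r4 r5 true false false false,
      cond r0 r1 r2 r3 r4 r5 false true false false,
      cond r0 r1 r2 r3 r4 r5 false false true false,
      cond r0 r1 r2 r3 r4 r5 false false false true,
      cond r0 r1 r2 r3 r4 r5 true true false false,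
      cond r0 r1 r2 r3 r4 r5 true false true false,
      cond r0 r1 r2 r3 r4 r5 true false false true,
      (0 < tot r0 r1 r2 r3 r4 r5)%N & (tot r0 r1 r2 r3 r4 r5 < 6)%N] ==>
  [&& r0 != r3, r2 != r5 & r1 == r4].
Proof.
by case: r0; case: r1; case: r2; case: r3; case: r4; case: r5.
Qed.

Lemma card4 (A : {set 'I_4}) : #|A| = (bA A + bB A + bC A + bD A)%N.
Proof.
rewrite /bA /bB /bC /bD -sum1_card big_mkcond /= !big_ord_recl big_ord0.
have e0 : (ord0 : 'I_4) = inord 0 by apply: val_inj; rewrite /= inordK.
have e1 : lift ord0 (ord0 : 'I_3) = inord 1 by apply: val_inj; rewrite /= inordK.
have e2 : lift ord0 (lift ord0 (ord0 : 'I_2)) = inord 2 by apply: val_inj; rewrite /= inordK.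
have e3 : lift ord0 (lift ord0 (lift ord0 (ord0 : 'I_1))) = inord 3 by apply: val_inj; rewrite /= inordK.
rewrite e3 e2 e1 e0.
by case: (inord 0 \in A); case: (inord 1 \in A); case: (inord 2 \in A); case: (inord 3 \in A).
Qed.

Definition hb (k : nat) : algC :=
  match k with O => 1 | S O => - 2%:R^-1 | S (S O) => 4%:R^-1 | S (S (S O)) => - 2%:R^-1 | _ => 1 end.

Lemma sum_hb (K : finType) : #|K| = 4%N ->
  \sum_(T : {set K}) hb #|T| = - 2%:R^-1.
Proof.
move=> hK.
have E (T : {set K}) : hb #|T| = \sum_(k < 5) (#|T| == k)%:R * hb k.
  have : (#|T| < 5)%N by rewrite ltnS -hK max_card.
  rewrite !big_ord_recl big_ord0 /=.
  by case: #|T| => [|[|[|[|[|//]]]]] _ /=; rewrite ?mul1r ?mul0r ?addr0 ?add0r.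
under eq_bigr => T _ do rewrite E.
rewrite exchange_big /=.
have C (k : nat) : \sum_(T : {set K}) ((#|T| == k)%:R : algC) = ('C(4, k))%:R.
  rewrite -hK -card_draws -sum1_card natr_sum [RHS]big_mkcond /=.
  by apply: eq_bigr => T _; rewrite inE; case: (#|T| == k).
rewrite !big_ord_recl big_ord0 /=.
rewrite -!mulr_suml !C /=.
rewrite /hb /= (_ : 'C(4, 0) = 1%N) // (_ : 'C(4, bump 0 0) = 4%N) // (_ : 'C(4, bump 0 (bump 0 0)) = 6%N) // (_ : 'C(4, bump 0 (bump 0 (bump 0 0))) = 4%N) // (_ : 'C(4, bump 0 (bump 0 (bump 0 (bump 0 0)))) = 1%N) //.
by field.
Qed.

Lemma pur_pos (Q : finType) (R : {set Q}) (psi : state (subQ R)) (T : {set subQ R}) :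
  unit_vec psi -> 0 <= pur T psi.
Proof.
move=> u; have := lbm T u => h.
have : 0 < 2%:R ^+ minn #|T| (#|R| - #|T|) * pur T psi by apply: lt_le_trans h.
by rewrite pmulr_rgt0 ?two_pos // => /ltW.
Qed.

Lemma special (R R' : {set 'I_6}) (psi : state (subQ R)) (psi' : state (subQ R')) :
  unit_vec psi -> unit_vec psi' ->
  (forall q q' : subQ R, party6 (val q) = party6 (val q') -> q = q') ->
  #|R| = 4%N ->
  (forall P, #|TS R' (TpP P)| = (bA P + bB P)%N) -> #|R'| = 2%N ->
  (forall P, pur (TS R' (TpP P)) psi' * pur (TS R (TpP P)) psi =
             (2%:R ^+ Eb (bA P) (bB P) (bC P) (bD P))^-1) ->
  False.
Proof.
move=> u u' inj cR cnt' cR' key.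
have sh := shadow psi.
have m1sq : (-1 : algC) ^+ 2 = 1 by rewrite expr2 mulN1r opprK.
have m14 : (-1 : algC) ^+ 4 = 1 by rewrite -[4%N]/(2 * 2)%N exprM m1sq expr1n.
have bound (T : {set subQ R}) : (-1) ^+ #|T| * pur T psi <= hb #|T|.
  have cT : (#|T| <= 4)%N by rewrite (leq_trans (max_card _)) // card_subQ cR.
  have lb := lbm T u; rewrite cR in lb.
  case hT: #|T| cT lb => [|[|[|[|[|n]]]]] // _ lb.
  - move/eqP: hT; rewrite cards_eq0 => /eqP ->.
    by rewrite pur_set0 (_ : nrm psi = 1) // expr1n mulr1.
    rewrite /= expr1 mulN1r lerN2.
    rewrite -[X in X <= _]mulr1 ler_pdivrMl ?ltr0n //.
  - pose P := [set party6 (val q) | q in T].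
    have eT : TS R (TpP P) = T.
      apply/setP => q; rewrite !inE; apply/imsetP/idP => [[q' q'T eq]|qT].
        by rewrite (inj q q' eq).
      by exists q.
    have cP : #|P| = 2%N.
      rewrite card_in_imset ?hT // => q q' _ _; exact: inj.
    have hm : (minn #|TS R' (TpP P)| (#|R'| - #|TS R' (TpP P)|) + 2 <= Eb (bA P) (bB P) (bC P) (bD P))%N.
      rewrite cnt' cR'; move: cP; rewrite card4.
      by case: (bA P); case: (bB P); case: (bC P); case: (bD P).
    have := ineq_quarter (key P) (lbm _ u') hm (pur_pos _ u).
    by rewrite eT /= m1sq mul1r.
  - rewrite /= exprS m1sq mulr1 mulN1r lerN2.
    rewrite -[X in X <= _]mulr1 ler_pdivrMl ?ltr0n //.

  - have -> : T = setT.
      apply/eqP; rewrite eqEcard subsetT cardsT card_subQ cR hT //.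
    by rewrite pur_setT (_ : nrm psi = 1) // expr1n mulr1 /= m14.
have := le_trans sh (ler_sum _ (fun T _ => bound T)).
by rewrite sum_hb ?card_subQ // oppr_ge0 invr_le0 lern0.
Qed.

Lemma enum6 (x : 'I_6) : x = o0 \/ x = o1 \/ x = o2 \/ x = o3 \/ x = o4 \/ x = o5.
Proof.
case: x => [[|[|[|[|[|[|//]]]]]] hx].
- by left; apply: val_inj.
- by right; left; apply: val_inj.
- by right; right; left; apply: val_inj.
- by right; right; right; left; apply: val_inj.
- by right; right; right; right; left; apply: val_inj.
- by right; right; right; right; right; apply: val_inj.
Qed.

Lemma inj_party (R : {set 'I_6}) : (o0 \in R) != (o3 \in R) -> (o2 \in R) != (o5 \in R) ->
  {in R &, injective party6}.
Proof.
move=> h03 h25 x y.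
case: (enum6 x) => [->|[->|[->|[->|[->|->]]]]]; case: (enum6 y) => [->|[->|[->|[->|[->|->]]]]] hx hy e //;
  try (by move/(congr1 val): e; rewrite /= ?inordK);
  try (by rewrite hx hy in h03); by rewrite hx hy in h25.
Qed.

Lemma special_bits (R R' : {set 'I_6}) (psi : state (subQ R)) (psi' : state (subQ R')) :
  unit_vec psi -> unit_vec psi' ->
  (o0 \in R) != (o3 \in R) -> (o2 \in R) != (o5 \in R) -> o1 \in R -> o4 \in R ->
  (forall i, (i \in R') = (i \notin R)) ->
  (forall P, pur (TS R' (TpP P)) psi' * pur (TS R (TpP P)) psi =
             (2%:R ^+ Eb (bA P) (bB P) (bC P) (bD P))^-1) ->
  False.
Proof.
move=> u u' h03 h25 h1 h4 hR' key.
apply: (special u u' _ _ _ _ key).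
- move=> q q' e; apply: val_inj; exact: (inj_party h03 h25 (valP q) (valP q') e).
- by rewrite card6 h1 h4; move: h03 h25; case: (o0 \in R); case: (o3 \in R); case: (o2 \in R); case: (o5 \in R).
- move=> P; rewrite card_cut !hR' h1 h4 /=.
  by move: h03 h25; case: (o0 \in R); case: (o3 \in R); case: (o2 \in R); case: (o5 \in R);
     case: (bA P); case: (bB P).
- rewrite card6 !hR' h1 h4 /=.
  by move: h03 h25; case: (o0 \in R); case: (o3 \in R); case: (o2 \in R); case: (o5 \in R).
Qed.

Definition Pof (a b c d : bool) : {set 'I_4} := [set i : 'I_4 | nth false [:: a; b; c; d] i].

Lemma bits_Pof a b c d : [/\ bA (Pof a b c d) = a, bB (Pof a b c d) = b,
                             bC (Pof a b c d) = c & bD (Pof a b c d) = d].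
Proof. by rewrite /bA /bB /bC /bD !inE !inordK. Qed.

Unset Implicit Arguments.

Theorem mainTheorem14 (G : state 'I_6) :
  unit_vec G ->
  (forall (u : 'I_6) (x : basis 'I_6), apply (pstr (Kgen u)) G x = G x) ->
  ~ reducible party6 G.
Proof.
move=> uG hK [S [S0 [ST [p1 [p2 [[u1 _] [[u2 _] [U [hU [c [hc hV]]]]]]]]]]].
have key P : pur (TS S (TpP P)) p1 * pur (TS (~: S) (TpP P)) p2 =
             (2%:R ^+ Eb (bA P) (bB P) (bC P) (bD P))^-1.
  rewrite -(purG uG hK) -pur_prod -(pur_scale _ _ hc) -(pur_ext _ hV) pur_LU //.
    exact: local_colorth (fun a => clifford_colorth (hU a)).
  exact: local_swcomm.
have condP a0 b0 c0 d0 : cond (o0 \in S) (o1 \in S) (o2 \in S) (o3 \in S) (o4 \in S) (o5 \in S) a0 b0 c0 d0.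
  have := ineq_nat (key (Pof a0 b0 c0 d0)) (lbm _ u1) (lbm _ u2).
  rewrite !card_cut card6 [#|~: S|]card6 !inE.
  by case: (bits_Pof a0 b0 c0 d0) => -> -> -> ->.
have hS0 : (0 < tot (o0 \in S) (o1 \in S) (o2 \in S) (o3 \in S) (o4 \in S) (o5 \in S))%N.
  by rewrite /tot -card6 card_gt0.
have hS6 : (tot (o0 \in S) (o1 \in S) (o2 \in S) (o3 \in S) (o4 \in S) (o5 \in S) < 6)%N.
  rewrite /tot -card6 ltn_neqAle.
  have -> : (#|S| <= 6)%N by rewrite (leq_trans (max_card _)) // card_ord.
  rewrite andbT; apply: contra ST => /eqP e.
  by rewrite eqEcard subsetT cardsT card_ord e.
have := comb (o0 \in S) (o1 \in S) (o2 \in S) (o3 \in S) (o4 \in S) (o5 \in S).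
rewrite !condP hS0 hS6 /= => /and3P [h03 h25 /eqP h14].
case h1 : (o1 \in S).
  apply: (special_bits u1 u2 h03 h25 h1 _ _) => [|i|P]; first by rewrite -h14.
    by rewrite inE.
  by rewrite mulrC.
apply: (special_bits u2 u1 _ _ _ _ _ key).
- by rewrite !inE; move: h03; case: (o0 \in S); case: (o3 \in S).
- by rewrite !inE; move: h25; case: (o2 \in S); case: (o5 \in S).
- by rewrite inE h1.
- by rewrite inE -h14 h1.
- by move=> i; rewrite !inE negbK.
Qed.
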